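(* Let $M=\{x_i,y_i,u_i^j,v_i^j: i\in\{1,2,3\},\ j\in\mathbb N\}$ (all these points distinct) be the metric space in which $d(y_1,x_2)=d(y_2,x_3)=d(y_3,x_1)=1$, $d(x_i,u_i^j)=d(u_i^j,v_i^j)=d(v_i^j,y_i)=1$ for all $i\in\{1,2,3\}$ and $j\in\mathbb N$, and the distance between any two other distinct points is $2$; choose any base point in $M$. Then $\mathrm{Lip}_0(M)$ has the LD2P but does not have the $w^*$-D2P (and hence does not have the D2P).
   Context: $\mathrm{Lip}_0(M)$ is the real Banach space of Lipschitz $f\colon M\to\mathbb R$ vanishing at the base point, normed by the best Lipschitz constant; it is the dual of the Lipschitz-free space $\mathcal F(M)$ (norm-closed span of point evaluations in $\mathrm{Lip}_0(M)^*$), which defines its weak-star topology. A Banach space $X$ has the LD2P if every slice $\{x\in B_X:x^*(x)>1-\alpha\}$ ($\|x^*\|=1$, $\alpha>0$) of the unit ball $B_X$ has diameter $2$; it has the D2P if every nonempty relatively weakly open subset of $B_X$ has diameter $2$; a dual space has the $w^*$-D2P if every nonempty relatively weak-star open subset of $B_X$ has diameter $2$. *)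

(* Defs.v *)
From HB Require Import structures.
From mathcomp Require Import all_boot all_order all_algebra.
From mathcomp Require Import all_classical all_reals.
Set Implicit Arguments. Unset Strict Implicit. Unset Printing Implicit Defensive.
Import Order.TTheory GRing.Theory Num.Theory.
Local Open Scope classical_set_scope.
Local Open Scope ring_scope.

(* Indices i in {1,2,3} are represented by 'I_3 = {0,1,2}; j ranges over nat.
   Distinct constructors / arguments give distinct points. *)
Inductive Pt : Type :=
| PX of 'I_3
| PY of 'I_3
| PU of 'I_3 & nat
| PV of 'I_3 & nat.

Definition pt_eqb (p q : Pt) : bool :=
  match p, q with
  | PX i, PX k => i == k
  | PY i, PY k => i == k
  | PU i j, PU k l => (i == k) && (j == l)
  | PV i j, PV k l => (i == k) && (j == l)
  | _, _ => false
  end.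

Definition edge (p q : Pt) : bool :=
  match p, q with
  | PY i, PX k => (k : nat) == (i.+1 %% 3)%N
  | PX i, PU k _ => i == k
  | PU i j, PV k l => (i == k) && (j == l)
  | PV i _, PY k => i == k
  | _, _ => false
  end.

Definition dist {R : realType} (p q : Pt) : R :=
  if pt_eqb p q then 0 else if edge p q || edge q p then 1 else 2.

Section Lip.
Variable R : realType.
Variable base : Pt.

Definition isLip0 (f : Pt -> R) : Prop :=
  f base = 0 /\ exists L : R, forall x y, `|f x - f y| <= L * dist x y.

Definition lipnorm (f : Pt -> R) : R :=
  sup [set r : R | exists x y, ~ pt_eqb x y /\ r = `|f x - f y| / dist x y].

Definition BLip : set (Pt -> R) := [set f | isLip0 f /\ lipnorm f <= 1].

Definition diam (S : set (Pt -> R)) : R :=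
  sup [set r : R | exists f g, S f /\ S g /\ r = lipnorm (f \- g)].

(* continuous linear functionals on Lip_0(M) (values off Lip_0(M) irrelevant) *)
Definition isDual (phi : (Pt -> R) -> R) : Prop :=
  (forall (a : R) f g, isLip0 f -> isLip0 g ->
     phi (fun x => a * f x + g x) = a * phi f + phi g) /\
  exists C : R, forall f, isLip0 f -> `|phi f| <= C * lipnorm f.

Definition dualnorm (phi : (Pt -> R) -> R) : R :=
  sup [set r : R | exists f, BLip f /\ r = `|phi f|].

Definition slice (phi : (Pt -> R) -> R) (alpha : R) : set (Pt -> R) :=
  [set f | BLip f /\ phi f > 1 - alpha].

Definition LD2P : Prop :=
  forall phi, isDual phi -> dualnorm phi = 1 ->
  forall alpha : R, 0 < alpha -> diam (slice phi alpha) = 2.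

(* The Lipschitz-free space F(M): norm-closure in Lip_0(M)^* of the span of
   the point evaluations delta_x f = f x. *)
Definition inFree (mu : (Pt -> R) -> R) : Prop :=
  isDual mu /\
  forall eps : R, 0 < eps -> exists s : seq (R * Pt),
    dualnorm (fun f => mu f - \sum_(p <- s) p.1 * f p.2) < eps.

(* U is relatively open in B for the topology generated by the family P of
   functionals (basic neighbourhoods given by finitely many members of P). *)
Definition relOpen (P : ((Pt -> R) -> R) -> Prop) (U : set (Pt -> R)) : Prop :=
  U `<=` BLip /\
  forall f, U f -> exists (n : nat) (mus : nat -> (Pt -> R) -> R) (eps : R),
    0 < eps /\ (forall k, (k < n)%N -> P (mus k)) /\
    forall g, BLip g -> (forall k, (k < n)%N -> `|mus k g - mus k f| < eps) -> U g.

Definition wstarD2P : Prop :=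
  forall U, relOpen inFree U -> U !=set0 -> diam U = 2.

Definition D2P : Prop :=
  forall U, relOpen isDual U -> U !=set0 -> diam U = 2.

End Lip.

(* Main.v *)
Require Import Defs.
From HB Require Import structures.
From mathcomp Require Import all_boot all_order all_algebra.
From mathcomp Require Import all_classical all_reals.
From mathcomp Require Import ring lra zify.
Set Implicit Arguments. Unset Strict Implicit. Unset Printing Implicit Defensive.
Import Order.TTheory GRing.Theory Num.Theory.
Local Open Scope classical_set_scope.
Local Open Scope ring_scope.

Lemma pt_eqbP (p q : Pt) : reflect (p = q) (pt_eqb p q).
Proof.
case: p => [i|i|i j|i j]; case: q => [k|k|k l|k l] /=;
  try (by constructor);
  try (by apply: (iffP eqP) => [->|[]]);
  by apply: (iffP andP) => [[/eqP-> /eqP->]|[-> ->]].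
Qed.

Definition adj (p q : Pt) := edge p q || edge q p.

Section Dist.
Context {R : realType}.

Lemma dist_self (p : Pt) : dist p p = 0 :> R.
Proof. by rewrite /dist; case: pt_eqbP. Qed.

Lemma dist_neq (p q : Pt) : p <> q -> dist p q = (if adj p q then 1 else 2) :> R.
Proof. by rewrite /dist; case: pt_eqbP. Qed.

Lemma dist_sym (p q : Pt) : dist p q = dist q p :> R.
Proof.
rewrite /dist; case: pt_eqbP => [->|H]; first by case: pt_eqbP.
case: pt_eqbP => [E|_]; first by case: H.
by rewrite orbC.
Qed.

Lemma dist_ge0 (p q : Pt) : 0 <= dist p q :> R.
Proof. rewrite /dist; case: ifP => _ //; case: ifP => _ //. Qed.

Lemma dist_le2 (p q : Pt) : dist p q <= 2 :> R.
Proof. rewrite /dist; case: ifP => _ //; case: ifP => _ //; lra. Qed.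

Lemma dist_ge1 (p q : Pt) : p <> q -> 1 <= dist p q :> R.
Proof. move=> H; rewrite dist_neq //; case: ifP => _ //; lra. Qed.

End Dist.

Definition succ3 (i : 'I_3) : 'I_3 := inZp i.+1.

Lemma edge_spec p q : edge p q ->
  (exists i, p = PY i /\ q = PX (succ3 i)) \/
  (exists i j, p = PX i /\ q = PU i j) \/
  (exists i j, p = PU i j /\ q = PV i j) \/
  (exists i j, p = PV i j /\ q = PY i).
Proof.
case: p => [i|i|i j|i j]; case: q => [k|k|k l|k l] //=.
- by move=> /eqP->; right; left; exists k, l.
- move=> /eqP E; left; exists i; split => //.
  suff -> : k = succ3 i by []. by apply: val_inj => /=; rewrite E.
- by move=> /andP[/eqP-> /eqP->]; right; right; left; exists k, l.
- by move=> /eqP->; right; right; right; exists k, j.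
Qed.

Section Lip.
Variable R : realType.
Variable base : Pt.

Definition lipset (f : Pt -> R) :=
  [set r : R | exists x y, ~ pt_eqb x y /\ r = `|f x - f y| / dist x y].

Lemma lipset_ne (f : Pt -> R) : lipset f !=set0.
Proof. by exists (`|f (PX ord0) - f (PY ord0)| / dist (PX ord0) (PY ord0)), (PX ord0), (PY ord0). Qed.

Lemma neqP (x y : Pt) : ~ pt_eqb x y <-> x <> y.
Proof. by split => H E; apply: H; [rewrite E; apply/pt_eqbP | apply/pt_eqbP]. Qed.

Lemma dist_gt0 (x y : Pt) : ~ pt_eqb x y -> 0 < dist x y :> R.
Proof. by move=> /neqP H; apply: lt_le_trans (@dist_ge1 R _ _ H); lra. Qed.

Lemma lip_le (f : Pt -> R) K : 0 <= K ->
  (forall x y, `|f x - f y| <= K * dist x y) -> lipnorm f <= K.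
Proof.
move=> K0 H; apply: ge_sup; first exact: lipset_ne.
move=> r [x [y [Hxy ->]]].
have d0 := dist_gt0 Hxy.
by rewrite ler_pdivrMr.
Qed.

Lemma lip_ub (f : Pt -> R) K :
  (forall x y, `|f x - f y| <= K * dist x y) ->
  forall x y, `|f x - f y| <= lipnorm f * dist x y.
Proof.
move=> H x y; case: (pt_eqbP x y) => [->|/neqP Hxy].
  by rewrite subrr normr0 dist_self mulr0.
have d0 := dist_gt0 Hxy.
rewrite -ler_pdivrMr //.
apply: ub_le_sup; last by exists x, y.
exists K => r [a [b [Hab ->]]].
have d1 := dist_gt0 Hab.
by rewrite ler_pdivrMr.
Qed.

Lemma isLip0_ub (f : Pt -> R) : isLip0 base f ->
  forall x y, `|f x - f y| <= lipnorm f * dist x y.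
Proof. by case=> _ [L HL]; exact: lip_ub HL. Qed.

Lemma lipnorm_ge0 (f : Pt -> R) : isLip0 base f -> 0 <= lipnorm f.
Proof.
move=> Hf.
have := isLip0_ub Hf (PX ord0) (PY ord0).
have d0 : 0 < dist (PX ord0) (PY ord0) :> R by apply: dist_gt0.
move=> H; have : 0 <= lipnorm f * dist (PX ord0) (PY ord0) by apply: le_trans H.
by rewrite pmulr_lge0.
Qed.

Lemma BLipP (f : Pt -> R) : BLip base f <-> f base = 0 /\ forall x y, `|f x - f y| <= dist x y.
Proof.
split.
  move=> [Hf Hn]; split; first by case: Hf.
  move=> x y; apply: le_trans (isLip0_ub Hf x y) _.
  by rewrite -[leRHS]mul1r ler_wpM2r // dist_ge0.
move=> [H0 H]; have H' : forall x y, `|f x - f y| <= 1 * dist x y.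
  by move=> x y; rewrite mul1r.
by split; [split => //; exists 1 | apply: lip_le].
Qed.

Lemma isLip0_bounded (f : Pt -> R) B : f base = 0 -> (forall p, `|f p| <= B) -> isLip0 base f.
Proof.
move=> H0 H; split => //; exists (2 * B) => x y.
case: (pt_eqbP x y) => [->|Hxy]; first by rewrite subrr normr0 dist_self mulr0.
have d1 : 1 <= dist x y :> R by apply: dist_ge1.
have B0 : 0 <= B by apply: le_trans (H x).
apply: le_trans (ler_normB _ _) _.
have := H x; have := H y.
move=> Hy Hx. nra.
Qed.

Lemma isLip0_bnd (f : Pt -> R) : isLip0 base f -> exists B, forall p, `|f p| <= B.
Proof.
move=> [H0 [L HL]]; exists (`|L| * 2) => p.
have := HL p base; rewrite H0 subr0 => Hp.
apply: le_trans Hp _.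
have := @dist_ge0 R p base; have := @dist_le2 R p base.
have : L <= `|L| by apply: ler_norm.
have : 0 <= `|L| by [].
nra.
Qed.

Lemma isLip0_comb (a : R) (f g : Pt -> R) : isLip0 base f -> isLip0 base g ->
  isLip0 base (fun x => a * f x + g x).
Proof.
move=> Hf Hg; have [Bf HBf] := isLip0_bnd Hf; have [Bg HBg] := isLip0_bnd Hg.
apply: (@isLip0_bounded _ (`|a| * Bf + Bg)).
  by case: Hf => -> _; case: Hg => -> _; rewrite mulr0 addr0.
move=> p; apply: le_trans (ler_normD _ _) _; rewrite normrM.
by apply: lerD => //; apply: ler_wpM2l.
Qed.

Lemma isLip0_zero : isLip0 base (fun _ => 0 : R).
Proof. by apply: (@isLip0_bounded _ 0) => // p; rewrite normr0. Qed.

Lemma BLip_zero : BLip base (fun _ => 0 : R).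
Proof. by apply/BLipP; split => // x y; rewrite subrr normr0 dist_ge0. Qed.

End Lip.

Section Dual.
Variable R : realType.
Variable base : Pt.
Variable phi : (Pt -> R) -> R.
Hypothesis Hphi : isDual base phi.

Lemma phi_lin (a : R) (f g : Pt -> R) : isLip0 base f -> isLip0 base g ->
  phi (fun x => a * f x + g x) = a * phi f + phi g.
Proof. by case: Hphi => H _; apply: H. Qed.

Lemma phi0 : phi (fun _ => 0) = 0.
Proof.
have := @phi_lin 1 (fun _ => 0) (fun _ => 0) (isLip0_zero _ _) (isLip0_zero _ _).
have -> : (fun _ : Pt => 1 * (0:R) + 0) = (fun _ => 0).
  by apply: funext => x; rewrite mul1r addr0.
rewrite mul1r => H; lra.
Qed.

Lemma phiZ (a : R) (f : Pt -> R) : isLip0 base f -> phi (fun x => a * f x) = a * phi f.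
Proof.
move=> Hf; have := @phi_lin a f (fun _ => 0) Hf (isLip0_zero _ _).
rewrite phi0 addr0 => <-; congr phi; apply: funext => x; by rewrite addr0.
Qed.

Lemma phiD (f g : Pt -> R) : isLip0 base f -> isLip0 base g ->
  phi (fun x => f x + g x) = phi f + phi g.
Proof.
move=> Hf Hg; have := @phi_lin 1 f g Hf Hg; rewrite mul1r => <-.
by congr phi; apply: funext => x; rewrite mul1r.
Qed.

Lemma isLip0_sum n (F : nat -> Pt -> R) : (forall t, isLip0 base (F t)) ->
  isLip0 base (fun x => \sum_(t < n) F t x).
Proof.
move=> HF; elim: n => [|n IH].
  have -> : (fun x => \sum_(t < 0) F t x) = (fun _ => 0).
    by apply: funext => x; rewrite big_ord0.
  exact: isLip0_zero.
have -> : (fun x => \sum_(t < n.+1) F t x) = (fun x => 1 * (\sum_(t < n) F t x) + F n x).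
  by apply: funext => x; rewrite big_ord_recr /= mul1r.
exact: isLip0_comb.
Qed.

Lemma phi_sum n (F : nat -> Pt -> R) : (forall t, isLip0 base (F t)) ->
  phi (fun x => \sum_(t < n) F t x) = \sum_(t < n) phi (F t).
Proof.
move=> HF; elim: n => [|n IH].
  have -> : (fun x => \sum_(t < 0) F t x) = (fun _ => 0).
    by apply: funext => x; rewrite big_ord0.
  by rewrite phi0 big_ord0.
rewrite big_ord_recr /= -IH -phiD //; last exact: isLip0_sum.
by congr phi; apply: funext => x; rewrite big_ord_recr.
Qed.

Hypothesis Hn : dualnorm base phi = 1.

Lemma dual_has_sup : has_sup [set r : R | exists f, BLip base f /\ r = `|phi f|].
Proof.
case: Hphi => _ [C HC]; split.
  by exists (`|phi (fun _ => 0)|), (fun _ => 0); split => //; exact: BLip_zero.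
exists `|C| => r [f [[Hf Hn1] ->]].
apply: le_trans (HC f Hf) _.
have := lipnorm_ge0 Hf.
have : C <= `|C| by apply: ler_norm.
have : 0 <= `|C| by [].
nra.
Qed.

Lemma phi_le1 (f : Pt -> R) : BLip base f -> `|phi f| <= 1.
Proof.
move=> Hf; rewrite -Hn; apply: (sup_upper_bound dual_has_sup).
by exists f.
Qed.

Lemma phi_bound (h : Pt -> R) K : h base = 0 -> 0 < K ->
  (forall x y, `|h x - h y| <= K * dist x y) -> `|phi h| <= K.
Proof.
move=> H0 K0 H.
pose h' := fun x => K^-1 * h x.
have Bh' : BLip base h'.
  apply/BLipP; split; first by rewrite /h' H0 mulr0.
  move=> x y; rewrite /h' -mulrBr normrM ger0_norm; last by rewrite invr_ge0 ltW.
  rewrite mulrC -(ler_pM2r K0) -mulrA mulVf ?gt_eqF // mulr1 mulrC; exact: H.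
have Lh' : isLip0 base h' by case: Bh'.
have -> : h = (fun x => K * h' x).
  by apply: funext => x; rewrite /h' mulrA mulfV ?mul1r // gt_eqF.
rewrite phiZ // normrM gtr0_norm //.
rewrite -[leRHS]mulr1 ler_wpM2l //; [exact: ltW | exact: phi_le1].
Qed.

Lemma exists_near (beta : R) : 0 < beta ->
  exists f, BLip base f /\ 1 - beta < phi f.
Proof.
move=> b0; have [e [f [Hf ->]] He] := sup_adherent b0 dual_has_sup.
have {}He : dualnorm base phi - beta < `|phi f| by []. rewrite Hn in He.
case: (lerP 0 (phi f)) => Hs.
  by exists f; split => //; rewrite ger0_norm in He.
exists (fun x => -1 * f x); split.
  move/BLipP: Hf => [H0 H]; apply/BLipP; split; first by rewrite H0 mulr0.
  by move=> x y; rewrite -mulrBr normrM normrN normr1 mul1r.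
rewrite phiZ; last by case: Hf.
by rewrite ltr0_norm in He => //; lra.
Qed.

End Dual.

Definition cd (p q : Pt) : nat := if pt_eqb p q then 0 else if adj p q then 1 else 2.

Lemma dist_cd {R : realType} p q : dist p q = (cd p q)%:R :> R.
Proof. by rewrite /dist /cd -/(adj p q); case: ifP => _ //; case: ifP. Qed.

Lemma hermite (N n : nat) : (0 < N)%N -> (\sum_(k < N) (n + k) %/ N)%N = n.
Proof.
move=> N0; elim: n => [|n IH].
  by rewrite big1 // => k _; rewrite add0n divn_small.
have E1 : (\sum_(k < N.+1) (n + k) %/ N = (n + 0)%/N + \sum_(k < N) (n + k.+1) %/ N)%N.
  by rewrite big_ord_recl.
have E2 : (\sum_(k < N.+1) (n + k) %/ N = \sum_(k < N) (n + k) %/ N + (n+N)%/N)%N.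
  by rewrite big_ord_recr.
have -> : (\sum_(k < N) (n.+1 + k) %/ N)%N = (\sum_(k < N) (n + k.+1) %/ N)%N.
  by apply: eq_bigr => k _; rewrite addSn addnS.
have H : ((n + N) %/ N = n %/ N + 1)%N by rewrite -[X in (n + X)%N](mul1n N) divnDMl.
rewrite IH H in E2; rewrite addn0 in E1.
lia.
Qed.

Lemma cd_sym p q : cd p q = cd q p.
Proof.
rewrite /cd /adj orbC; case: (pt_eqbP p q) => [->|H]; first by case: pt_eqbP.
by case: (pt_eqbP q p) => // E; case: H.
Qed.

Section Avg.
Variable R : realType.

Lemma max_exists (a : nat -> R) N : (0 < N)%N ->
  exists k, (k < N)%N /\ forall t, (t < N)%N -> a t <= a k.
Proof.
elim: N => // N IH _; case: N IH => [|N] IH.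
  by exists 0%N; split => // t; rewrite ltnS leqn0 => /eqP->.
have [k [Hk Hmax]] := IH isT.
case: (lerP (a N.+1) (a k)) => H.
  exists k; split; first by apply: (ltn_trans Hk).
  move=> t; rewrite ltnS leq_eqVlt => /orP[/eqP->//|]; exact: Hmax.
exists N.+1; split => // t; rewrite ltnS leq_eqVlt => /orP[/eqP->//|/Hmax Ht].
by apply: le_trans Ht _; apply: ltW.
Qed.

Lemma avg_le (a : nat -> R) N : (0 < N)%N ->
  exists k, (k < N)%N /\ N%:R^-1 * (\sum_(t < N) a t) <= a k.
Proof.
move=> N0; have [k [Hk Hmax]] := max_exists a N0.
exists k; split => //.
have N0' : 0 < N%:R :> R by rewrite ltr0n.
rewrite ler_pdivrMl //.
have -> : N%:R * a k = \sum_(t < N) a k by rewrite sumr_const card_ord mulr_natl.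
by apply: ler_sum => t _; apply: Hmax.
Qed.
End Avg.

Section Round.
Variable R : realType.
Variable base : Pt.
Variable phi : (Pt -> R) -> R.
Hypothesis Hphi : isDual base phi.
Hypothesis Hn : dualnorm base phi = 1.

Lemma BLip_abs (f : Pt -> R) p : BLip base f -> `|f p| <= 2.
Proof.
move/BLipP=> [H0 H]; have := H p base; rewrite H0 subr0 => Hp.
by apply: le_trans Hp (dist_le2 _ _).
Qed.

Lemma round (f : Pt -> R) (N : nat) : (0 < N)%N -> BLip base f ->
  exists z : Pt -> int, BLip base (fun p => (z p)%:~R : R) /\
    phi f - N%:R^-1 <= phi (fun p => (z p)%:~R : R).
Proof.
move=> N0 Bf.
have N0' : 0 < N%:R :> R by rewrite ltr0n.
pose x p := N%:R * (f p + 2).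
have x0 p : 0 <= x p.
  rewrite /x; apply: mulr_ge0; first exact: ltW.
  have := BLip_abs p Bf; rewrite ler_norml => /andP[]; lra.
pose n p := Num.truncn (x p).
have nI p : (n p)%:R <= x p < (n p).+1%:R by apply: truncn_itv.
have nlip p q : (n p <= n q + N * cd p q)%N.
  have : (n p)%:R < ((n q + N * cd p q).+1)%:R :> R.
    have [Hp _] := andP (nI p); have [_ Hq] := andP (nI q).
    move/BLipP: Bf => [_ Hf]; have := Hf p q; rewrite dist_cd ler_norml => /andP[_ Hpq].
    rewrite -addn1 natrD in Hq; rewrite -addn1 !natrD natrM.
    have : x p - x q <= N%:R * (cd p q)%:R by rewrite /x -mulrBr ler_pM2l //; lra.
    lra.
  by rewrite ltr_nat ltnS.
pose A (k : nat) p := ((n p + k) %/ N)%N.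
have Alip k p q : (A k p <= A k q + cd p q)%N.
  rewrite /A -divnDMl //; apply: leq_div2r.
  by have := nlip p q; rewrite mulnC; lia.
pose g (k : nat) p : R := (A k p)%:R - (A k base)%:R.
have Bg k : BLip base (g k).
  apply/BLipP; split; first by rewrite /g subrr.
  move=> p q; rewrite /g opprB addrA subrK dist_cd ler_norml.
  have h1 : ((A k p)%:R <= (A k q)%:R + (cd p q)%:R :> R) by rewrite -natrD ler_nat.
  have h2 : ((A k q)%:R <= (A k p)%:R + (cd p q)%:R :> R) by rewrite -natrD ler_nat cd_sym.
  apply/andP; split; lra.
have Lg k : isLip0 base (g k) by case: (Bg k).
pose F p := N%:R^-1 * \sum_(k < N) g k p.
have LF : isLip0 base F.
  have -> : F = (fun p => N%:R^-1 * (\sum_(k < N) g k p) + (fun _ => 0) p).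
    by apply: funext => p; rewrite addr0.
  apply: isLip0_comb; last exact: isLip0_zero.
  exact: isLip0_sum.
have sumg p : \sum_(k < N) g k p = (n p)%:R - (n base)%:R.
  rewrite /g sumrB -!natr_sum.
  have H q : (\sum_(k < N) A k q)%N = n q.
    by rewrite /A; apply: hermite.
  by rewrite !H.
have phiF : phi F = N%:R^-1 * \sum_(k < N) phi (g k).
  rewrite /F (phiZ Hphi); last exact: isLip0_sum. congr (_ * _); apply: (phi_sum Hphi) => k. exact: Lg.
have Fbound : phi f - N%:R^-1 <= phi F.
  pose h p := F p - f p.
  have Lf : isLip0 base f by case: Bf.
  have Eh : phi h = phi F - phi f.
    have := @phi_lin _ _ _ Hphi (-1) f F Lf LF.
    have -> : (fun x => -1 * f x + F x) = h.
      by apply: funext => p; rewrite /h; ring.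
    by move=> ->; ring.
  have e p : h p = ((n p)%:R / N%:R - (f p + 2)) - ((n base)%:R / N%:R - (f base + 2)).
    rewrite /h /F sumg; move/BLipP: Bf => [-> _].
    by field; rewrite gt_eqF.
  have eI p : - N%:R^-1 < (n p)%:R / N%:R - (f p + 2) <= 0.
    have [H1 H2] := andP (nI p).
    rewrite -addn1 natrD in H2.
    have H3 : (n p)%:R / N%:R <= f p + 2.
      by rewrite ler_pdivrMr // mulrC.
    have H4 : f p + 2 - N%:R^-1 < (n p)%:R / N%:R.
      rewrite ltr_pdivlMr // mulrBl mulVf ?gt_eqF //.
      by rewrite mulrC; move: H2; rewrite /x; lra.
    by apply/andP; split; lra.
  have : `|phi h| <= N%:R^-1.
    apply: (phi_bound Hphi Hn) => //.
    - by rewrite e subrr.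
    - by rewrite invr_gt0.
    move=> p q; rewrite !e.
    case: (pt_eqbP p q) => [->|Hpq]; first by rewrite subrr normr0 dist_self mulr0.
    have := @dist_ge1 R _ _ Hpq; have := eI p; have := eI q.
    move=> /andP[q1 q2] /andP[p1 p2] d1.
    have Ni : 0 < N%:R^-1 :> R by rewrite invr_gt0.
    rewrite ler_norml; apply/andP; split; nra.
  by rewrite Eh ler_norml => /andP[H _]; lra.
have [k [Hk Hkmax]] := avg_le (fun k => phi (g k)) N0.
exists (fun p => (A k p)%:Z - (A k base)%:Z); split.
  have -> : (fun p => ((A k p)%:Z - (A k base)%:Z)%:~R) = g k :> (Pt -> R).
    by apply: funext => p; rewrite /g intrD intrN !pmulrn.
  exact: Bg.
have -> : (fun p => ((A k p)%:Z - (A k base)%:Z)%:~R) = g k :> (Pt -> R).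
  by apply: funext => p; rewrite /g intrD intrN !pmulrn.
by apply: le_trans Fbound _; rewrite phiF.
Qed.

End Round.

Definition o0 : 'I_3 := @Ordinal 3 0 isT.
Definition o1 : 'I_3 := @Ordinal 3 1 isT.
Definition o2 : 'I_3 := @Ordinal 3 2 isT.

Lemma cd_le2 p q : (cd p q <= 2)%N.
Proof. by rewrite /cd; case: ifP => _ //; case: ifP. Qed.

Definition niceZ (z : Pt -> int) (i : 'I_3) :=
  (forall q, `|z q - z (PX i)| <= 1) \/ (forall q, `|z q - z (PY i)| <= 1) \/
  (z (PX i) = z (PY i) /\ forall q, z (PX i) <= z q <= z (PX i) + 2) \/
  (z (PX i) = z (PY i) /\ forall q, z (PX i) - 2 <= z q <= z (PX i)).

Lemma nice_band (z : Pt -> int) b :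
  (forall p q, `|z p - z q| <= (cd p q)%:Z) ->
  (forall q, b <= z q <= b + 2) -> exists i, niceZ z i.
Proof.
move=> Hz Hb.
have e0 : `|z (PY o0) - z (PX o1)| <= 1 := Hz (PY o0) (PX o1).
have e1 : `|z (PY o1) - z (PX o2)| <= 1 := Hz (PY o1) (PX o2).
have e2 : `|z (PY o2) - z (PX o0)| <= 1 := Hz (PY o2) (PX o0).
have b1 := Hb (PX o0); have b2 := Hb (PX o1); have b3 := Hb (PX o2).
have b4 := Hb (PY o0); have b5 := Hb (PY o1); have b6 := Hb (PY o2).
have mid w : z w = b + 1 -> forall q, `|z q - z w| <= 1.
  move=> Hw q; have := Hb q; rewrite Hw; lia.
have lo i : z (PX i) = b -> z (PY i) = b -> niceZ z i.
  move=> H1 H2; right; right; left; split; first by rewrite H1 H2.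
  by rewrite H1.
have hi i : z (PX i) = b + 2 -> z (PY i) = b + 2 -> niceZ z i.
  move=> H1 H2; right; right; right; split; first by rewrite H1 H2.
  by rewrite H1; move=> q; have := Hb q; lia.
have : z (PX o0) = b + 1 \/ z (PX o1) = b + 1 \/ z (PX o2) = b + 1 \/
        z (PY o0) = b + 1 \/ z (PY o1) = b + 1 \/ z (PY o2) = b + 1 \/
        (z (PX o0) = b /\ z (PY o0) = b) \/ (z (PX o1) = b /\ z (PY o1) = b) \/
        (z (PX o2) = b /\ z (PY o2) = b) \/ (z (PX o0) = b + 2 /\ z (PY o0) = b + 2) \/
        (z (PX o1) = b + 2 /\ z (PY o1) = b + 2) \/
        (z (PX o2) = b + 2 /\ z (PY o2) = b + 2).
  lia.
case=> [H|[H|[H|[H|[H|[H|[[H1 H2]|[[H1 H2]|[[H1 H2]|[[H1 H2]|[[H1 H2]|[H1 H2]]]]]]]]]]]].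
- by exists o0; left; apply: mid.
- by exists o1; left; apply: mid.
- by exists o2; left; apply: mid.
- by exists o0; right; left; apply: mid.
- by exists o1; right; left; apply: mid.
- by exists o2; right; left; apply: mid.
- by exists o0; apply: lo.
- by exists o1; apply: lo.
- by exists o2; apply: lo.
- by exists o0; apply: hi.
- by exists o1; apply: hi.
- by exists o2; apply: hi.
Qed.

Lemma niceZ_exists (z : Pt -> int) :
  (forall p q, `|z p - z q| <= (cd p q)%:Z) -> exists i, niceZ z i.
Proof.
move=> Hz.
have H2 p q : `|z p - z q| <= 2.
  apply: le_trans (Hz p q) _; have := cd_le2 p q; lia.
case: (pselect (forall q, `|z q - z (PX o0)| <= 1)) => [H|/existsNP [q0 Hq0]].
  by exists o0; left.
have Hq1 : 1 < `|z q0 - z (PX o0)| by rewrite ltNge; apply/negP.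
have Hq2 := H2 q0 (PX o0).
case: (lerP (z (PX o0)) (z q0)) => Hc.
  apply: (@nice_band z (z (PX o0))) => // q.
  have := H2 q (PX o0); have := H2 q q0; lia.
apply: (@nice_band z (z q0)) => // q.
have := H2 q (PX o0); have := H2 q q0; lia.
Qed.

Lemma adjU i j q : adj (PU i j) q -> q = PX i \/ q = PV i j.
Proof.
rewrite /adj; case: q => [k|k|k l|k l] //=; rewrite ?orbF.
- by move=> /eqP->; left.
- by move=> /andP[/eqP-> /eqP->]; right.
Qed.

Lemma adjV i j q : adj (PV i j) q -> q = PU i j \/ q = PY i.
Proof.
rewrite /adj; case: q => [k|k|k l|k l] //=; rewrite ?orbF.
- by move=> /eqP->; right.
- by move=> /andP[/eqP-> /eqP->]; left.
Qed.

Section Mod.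
Variable R : realType.
Variable base : Pt.

Lemma dist_UX i j : dist (PU i j) (PX i) = 1 :> R.
Proof. by rewrite /dist /= eqxx. Qed.
Lemma dist_UV i j : dist (PU i j) (PV i j) = 1 :> R.
Proof. by rewrite /dist /= !eqxx. Qed.
Lemma dist_VY i j : dist (PV i j) (PY i) = 1 :> R.
Proof. by rewrite /dist /= !eqxx. Qed.

Lemma dist_U_other i j q : q <> PU i j -> q <> PX i -> q <> PV i j ->
  dist (PU i j) q = 2 :> R.
Proof.
move=> H1 H2 H3; rewrite dist_neq; last by move=> E; apply: H1.
by case: ifP => // /adjU [] E.
Qed.

Lemma dist_V_other i j q : q <> PV i j -> q <> PY i -> q <> PU i j ->
  dist (PV i j) q = 2 :> R.
Proof.
move=> H1 H2 H3; rewrite dist_neq; last by move=> E; apply: H1.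
by case: ifP => // /adjV [] E.
Qed.

Definition modf (g : Pt -> R) (i : 'I_3) (j : nat) (u v : R) : Pt -> R :=
  fun p => if pt_eqb p (PU i j) then u else if pt_eqb p (PV i j) then v else g p.

Definition valid (g : Pt -> R) (i : 'I_3) (u v : R) :=
  [/\ `|u - g (PX i)| <= 1, `|v - g (PY i)| <= 1, `|u - v| <= 1 &
      forall q, `|u - g q| <= 2 /\ `|v - g q| <= 2].

Lemma modf_lip (g : Pt -> R) i j u v :
  (forall x y, `|g x - g y| <= dist x y) -> valid g i u v ->
  forall x y, `|modf g i j u v x - modf g i j u v y| <= dist x y.
Proof.
move=> Hg [h1 h2 h3 h4].
have UV : PU i j <> PV i j by [].
have key x y : x = PU i j \/ x = PV i j ->
    `|modf g i j u v x - modf g i j u v y| <= dist x y.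
  rewrite /modf; case=> ->; rewrite /= ?eqxx /=.
  - case: (pt_eqbP y (PU i j)) => [->|n1]; first by rewrite subrr normr0 dist_ge0.
    case: (pt_eqbP y (PV i j)) => [->|n2]; first by rewrite dist_UV.
    case: (pt_eqbP y (PX i)) => [->|n3]; first by rewrite dist_UX.
    by rewrite dist_U_other //; case: (h4 y).
  -
    case: (pt_eqbP y (PU i j)) => [->|n1]; first by rewrite distrC dist_sym dist_UV.
    case: (pt_eqbP y (PV i j)) => [->|n2]; first by rewrite subrr normr0 dist_ge0.
    case: (pt_eqbP y (PY i)) => [->|n3]; first by rewrite dist_VY.
    by rewrite dist_V_other //; case: (h4 y).
move=> x y.
case: (pt_eqbP x (PU i j)) => [E|nx1]; first by apply: key; left.
case: (pt_eqbP x (PV i j)) => [E|nx2]; first by apply: key; right.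
case: (pt_eqbP y (PU i j)) => [E|ny1].
  by rewrite distrC dist_sym; apply: key; left.
case: (pt_eqbP y (PV i j)) => [E|ny2].
  by rewrite distrC dist_sym; apply: key; right.
rewrite /modf.
have -> : pt_eqb x (PU i j) = false by apply/negP => /pt_eqbP.
have -> : pt_eqb x (PV i j) = false by apply/negP => /pt_eqbP.
have -> : pt_eqb y (PU i j) = false by apply/negP => /pt_eqbP.
have -> : pt_eqb y (PV i j) = false by apply/negP => /pt_eqbP.
exact: Hg.
Qed.

Lemma modf_base (g : Pt -> R) i j u v :
  base <> PU i j -> base <> PV i j -> modf g i j u v base = g base.
Proof.
move=> H1 H2; rewrite /modf.
case: (pt_eqbP base (PU i j)) => // _; by case: (pt_eqbP base (PV i j)).
Qed.

Lemma modf_BLip (g : Pt -> R) i j u v :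
  BLip base g -> valid g i u v -> base <> PU i j -> base <> PV i j ->
  BLip base (modf g i j u v).
Proof.
move=> /BLipP [H0 Hg] Hv H1 H2; apply/BLipP; split.
  by rewrite modf_base.
exact: modf_lip.
Qed.

Lemma diam_pair (f1 f2 : Pt -> R) x y : BLip base f1 -> BLip base f2 -> x <> y ->
  `|(f1 x - f2 x) - (f1 y - f2 y)| = 2 * dist x y -> lipnorm (f1 \- f2) = 2.
Proof.
move=> /BLipP[_ H1] /BLipP[_ H2] Hxy Hsep.
have Hle : forall a b, `|(f1 \- f2) a - (f1 \- f2) b| <= 2 * dist a b.
  move=> a b /=.
  have -> : f1 a - f2 a - (f1 b - f2 b) = (f1 a - f1 b) - (f2 a - f2 b) by ring.
  apply: le_trans (ler_normB _ _) _.
  have := H1 a b; have := H2 a b; lra.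
apply/le_anti/andP; split; first by apply: lip_le => //; lra.
have d0 : 0 < dist x y :> R by apply: lt_le_trans (dist_ge1 Hxy); lra.
have -> : 2 = `|(f1 \- f2) x - (f1 \- f2) y| / dist x y.
  by rewrite /= Hsep mulfK // gt_eqF.
apply: ub_le_sup.
  by exists 2 => r [a [b [Hab ->]]]; rewrite ler_pdivrMr ?dist_gt0 //; apply: Hle.
by exists x, y; split => //; apply/neqP.
Qed.

End Mod.

Section Nice.
Variable R : realType.

Definition niceR (g : Pt -> R) (i : 'I_3) :=
  (forall q, `|g q - g (PX i)| <= 1) \/ (forall q, `|g q - g (PY i)| <= 1) \/
  (g (PX i) = g (PY i) /\ forall q, g (PX i) <= g q <= g (PX i) + 2) \/
  (g (PX i) = g (PY i) /\ forall q, g (PX i) - 2 <= g q <= g (PX i)).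

Lemma niceZR (z : Pt -> int) i : niceZ z i -> niceR (fun p => (z p)%:~R : R) i.
Proof.
have nrm (a b : int) : `|a - b| <= 1 -> `|(a%:~R : R) - b%:~R| <= 1.
  by move=> H; rewrite -intrB -intr_norm -[1]/(1%:~R : R) ler_int.
have bnd (a b c : int) : a <= b <= c -> (a%:~R : R) <= (b%:~R : R) <= (c%:~R : R).
  by rewrite !ler_int.
case=> [H|[H|[[E H]|[E H]]]].
- by left => q; apply: nrm.
- by right; left => q; apply: nrm.
- right; right; left; split; first by rewrite E.
  by move=> q; have := bnd _ _ _ (H q); rewrite intrD.
- right; right; right; split; first by rewrite E.
  by move=> q; have := bnd _ _ _ (H q); rewrite intrB.
Qed.

Lemma configs (g : Pt -> R) i : niceR g i -> exists u1 v1 u2 v2,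
  [/\ valid g i u1 v1, valid g i u2 v2 &
     `|u1 - u2| = 2 \/ `|v1 - v2| = 2 \/ `|(u1 - v1) - (u2 - v2)| = 2].
Proof.
case=> [H|[H|[[E H]|[E H]]]].
- pose c := g (PX i); pose y := g (PY i); have Ec : c = g (PX i) by []; have Ey : y = g (PY i) by [].
  have Hy := H (PY i); rewrite ler_norml in Hy; case/andP: Hy => y1 y2.
  exists (c + 1), ((c + 1 + y) / 2), (c - 1), ((c - 1 + y) / 2); split.
  + split; rewrite ?ler_norml; try (apply/andP; split; lra).
    move=> q; have := H q; rewrite !ler_norml => /andP[q1 q2].
    by split; apply/andP; split; lra.
  + split; rewrite ?ler_norml; try (apply/andP; split; lra).
    move=> q; have := H q; rewrite !ler_norml => /andP[q1 q2].
    by split; apply/andP; split; lra.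
  + left; have -> : c + 1 - (c - 1) = 2 by ring.
    by rewrite ger0_norm.
- pose c := g (PY i); pose x := g (PX i); have Ec : c = g (PY i) by []; have Ex : x = g (PX i) by [].
  have Hx := H (PX i); rewrite ler_norml in Hx; case/andP: Hx => x1 x2.
  exists ((c + 1 + x) / 2), (c + 1), ((c - 1 + x) / 2), (c - 1); split.
  + split; rewrite ?ler_norml; try (apply/andP; split; lra).
    move=> q; have := H q; rewrite !ler_norml => /andP[q1 q2].
    by split; apply/andP; split; lra.
  + split; rewrite ?ler_norml; try (apply/andP; split; lra).
    move=> q; have := H q; rewrite !ler_norml => /andP[q1 q2].
    by split; apply/andP; split; lra.
  + right; left; have -> : c + 1 - (c - 1) = 2 by ring.
    by rewrite ger0_norm.
- pose c := g (PX i); have Ec : c = g (PX i) by [].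
  exists (c + 1), c, c, (c + 1); split.
  + split; rewrite -?E ?ler_norml; try (apply/andP; split; lra).
    move=> q; have := H q => /andP[q1 q2].
    by rewrite !ler_norml; split; apply/andP; split; lra.
  + split; rewrite -?E ?ler_norml; try (apply/andP; split; lra).
    move=> q; have := H q => /andP[q1 q2].
    by rewrite !ler_norml; split; apply/andP; split; lra.
  + right; right; have -> : c + 1 - c - (c - (c + 1)) = 2 by ring.
    by rewrite ger0_norm.
- pose c := g (PX i); have Ec : c = g (PX i) by [].
  exists (c - 1), c, c, (c - 1); split.
  + split; rewrite -?E ?ler_norml; try (apply/andP; split; lra).
    move=> q; have := H q => /andP[q1 q2].
    by rewrite !ler_norml; split; apply/andP; split; lra.
  + split; rewrite -?E ?ler_norml; try (apply/andP; split; lra).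
    move=> q; have := H q => /andP[q1 q2].
    by rewrite !ler_norml; split; apply/andP; split; lra.
  + right; right; have -> : c - 1 - c - (c - (c - 1)) = -2 by ring.
    by rewrite normrN ger0_norm.
Qed.

Lemma sum_single (a : nat -> R) n B : 0 <= B -> (forall t, `|a t| <= B) ->
  (forall t s, a t != 0 -> a s != 0 -> t = s) -> `|\sum_(t < n) a t| <= B.
Proof.
move=> B0 Ha Hu; elim: n => [|n IH]; first by rewrite big_ord0 normr0.
rewrite big_ord_recr /=.
case: (eqVneq (a n) 0) => [->|Hn]; first by rewrite addr0.
rewrite big1 ?add0r // => t _.
apply/eqP; apply/negP => Ht; move/negP: Ht => Ht.
by have := Hu _ _ Ht Hn => E; move: (ltn_ord t); rewrite E ltnn.
Qed.

End Nice.

Section Step.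
Variable R : realType.
Variable base : Pt.
Variable phi : (Pt -> R) -> R.
Hypothesis Hphi : isDual base phi.
Hypothesis Hn : dualnorm base phi = 1.

Definition J0 := match base with PU _ j => j.+1 | PV _ j => j.+1 | _ => 0%N end.

Lemma J0_ok i t : base <> PU i (J0 + t) /\ base <> PV i (J0 + t).
Proof.
rewrite /J0; case: base => [k|k|k l|k l]; split => // [[_ E]]; lia.
Qed.

Lemma valid_mid (g : Pt -> R) i u1 v1 u2 v2 : valid g i u1 v1 -> valid g i u2 v2 ->
  valid g i ((u1 + u2) / 2) ((v1 + v2) / 2).
Proof.
move=> [a1 b1 c1 d1] [a2 b2 c2 d2].
move: a1 b1 c1 a2 b2 c2; rewrite !ler_norml => /andP[? ?] /andP[? ?] /andP[? ?]
  /andP[? ?] /andP[? ?] /andP[? ?].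
split; rewrite ?ler_norml; try (apply/andP; split; lra).
move=> q; have := d1 q; have := d2 q; rewrite !ler_norml.
move=> [/andP[? ?] /andP[? ?]] [/andP[? ?] /andP[? ?]].
by split; apply/andP; split; lra.
Qed.

Lemma split_step (g : Pt -> R) i u1 v1 u2 v2 (M : nat) : (0 < M)%N ->
  BLip base g -> valid g i u1 v1 -> valid g i u2 v2 ->
  exists j, [/\ base <> PU i j, base <> PV i j,
    2 * phi g - 8 / M%:R - 1 <= phi (modf g i j u1 v1) &
    2 * phi g - 8 / M%:R - 1 <= phi (modf g i j u2 v2)].
Proof.
move=> M0 Bg V1 V2.
have M0' : 0 < M%:R :> R by rewrite ltr0n.
have Vm := valid_mid V1 V2.
pose um := (u1 + u2) / 2; pose vm := (v1 + v2) / 2.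
pose w (t : nat) := modf g i (J0 + t) um vm.
have Bw t : BLip base (w t).
  by have [H1 H2] := J0_ok i t; apply: modf_BLip.
have Lw t : isLip0 base (w t) by case: (Bw t).
have Lg : isLip0 base g by case: Bg.
pose G p := M%:R^-1 * \sum_(t < M) w t p.
have LG : isLip0 base G.
  have -> : G = (fun p => M%:R^-1 * (\sum_(t < M) w t p) + (fun _ => 0) p).
    by apply: funext => p; rewrite addr0.
  apply: isLip0_comb; last exact: isLip0_zero.
  exact: isLip0_sum.
have phiG : phi G = M%:R^-1 * \sum_(t < M) phi (w t).
  rewrite /G (phiZ Hphi); last exact: isLip0_sum.
  by congr (_ * _); apply: (phi_sum Hphi) => t.
have Gbound : phi g - 4 / M%:R <= phi G.
  pose h p := G p - g p.
  have Eh : phi h = phi G - phi g.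
    have := @phi_lin _ _ _ Hphi (-1) g G Lg LG.
    have -> : (fun x => -1 * g x + G x) = h by apply: funext => p; rewrite /h; ring.
    by move=> ->; ring.
  have hb p : `|h p| <= 2 / M%:R.
    have -> : h p = M%:R^-1 * \sum_(t < M) (w t p - g p).
      rewrite /h /G sumrB sumr_const card_ord mulrBr; congr (_ - _).
      by rewrite -mulr_natr; field; rewrite gt_eqF.
    rewrite normrM ger0_norm; last by rewrite invr_ge0 ltW.
    rewrite mulrC; apply: ler_wpM2r; first by rewrite invr_ge0 ltW.
    apply: (@sum_single R (fun t => w t p - g p)) => //.
    - move=> t; rewrite /w /modf.
      have [_ _ _ H4] := Vm.
      case: (pt_eqb p _); first by case: (H4 p).
      by case: (pt_eqb p _); [case: (H4 p) | rewrite subrr normr0].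
    - have supp t' : w t' p - g p != 0 -> p = PU i (J0 + t') \/ p = PV i (J0 + t').
        rewrite /w /modf.
        case: (pt_eqbP p (PU i (J0 + t'))) => [E|_]; first by left.
        case: (pt_eqbP p (PV i (J0 + t'))) => [E|_]; first by right.
        by rewrite subrr eqxx.
      move=> t s Ht Hs; case: (supp t Ht) => E1; case: (supp s Hs) => E2;
        rewrite E1 in E2; case: E2 => //; lia.
  have : `|phi h| <= 4 / M%:R.
    apply: (phi_bound Hphi Hn) => //.
    - rewrite /h /G; move/BLipP: Bg => [-> _].
      rewrite subr0 big1 ?mulr0 // => t _.
      by case: (Bw t) => -[].
    - by apply: divr_gt0.
    move=> p q.
    case: (pt_eqbP p q) => [->|Hpq]; first by rewrite subrr normr0 dist_self mulr0.
    have d1 := @dist_ge1 R _ _ Hpq.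
    apply: le_trans (ler_normB _ _) _.
    have := hb p; have := hb q.
    have : 0 < 4 / M%:R :> R by apply: divr_gt0.
    have -> : 2 / M%:R = (4 / M%:R) / 2 :> R by field; rewrite gt_eqF.
    nra.
  by rewrite Eh ler_norml => /andP[H _]; lra.
have [t [Ht Htmax]] := avg_le (fun t => phi (w t)) M0.
have [H1 H2] := J0_ok i t.
exists (J0 + t)%N.
have B1 := modf_BLip Bg V1 H1 H2.
have B2 := modf_BLip Bg V2 H1 H2.
have L1 : isLip0 base (modf g i (J0 + t) u1 v1) by case: B1.
have L2 : isLip0 base (modf g i (J0 + t) u2 v2) by case: B2.
have Ew : phi (w t) = 2^-1 * phi (modf g i (J0 + t) u1 v1) +
                      2^-1 * phi (modf g i (J0 + t) u2 v2).
  have L2' : isLip0 base (fun x => 2^-1 * modf g i (J0 + t) u2 v2 x).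
    have -> : (fun x => 2^-1 * modf g i (J0 + t) u2 v2 x) =
            (fun x => 2^-1 * modf g i (J0 + t) u2 v2 x + (fun _ => 0) x).
      by apply: funext => x; rewrite addr0.
    exact: isLip0_comb _ L2 (isLip0_zero _ _).
  have E := phi_lin Hphi (2^-1) L1 L2'.
  rewrite (phiZ Hphi _ L2) in E; rewrite -E.
  congr phi; apply: funext => p; rewrite /w /modf /um /vm.
  by case: ifP => _; [|case: ifP => _]; field.
have p1 := phi_le1 Hphi Hn B1; have p2 := phi_le1 Hphi Hn B2.
rewrite ler_norml in p1; rewrite ler_norml in p2.
case/andP: p1 => _ p1; case/andP: p2 => _ p2.
rewrite phiG in Gbound.
have Hg : phi g - 4 / M%:R <= phi (w t) by apply: le_trans Gbound Htmax.
have E8 : 8 / M%:R = 2 * (4 / M%:R) :> R by field; rewrite gt_eqF.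
by split => //; lra.
Qed.

End Step.

Lemma big_nat_inv (R : realType) (x : R) : 0 < x ->
  exists N : nat, (0 < N)%N /\ N%:R^-1 < x.
Proof.
move=> x0; exists (Num.truncn x^-1).+1; split => //.
have h := truncnS_gt (x^-1).
have p : 0 < x^-1 by rewrite invr_gt0.
rewrite -[ltRHS]invrK ltf_pV2 // posrE ?ltr0n //.
Qed.

Lemma diam_le2 (R : realType) base (S : set (Pt -> R)) f1 f2 :
  S `<=` BLip base -> S f1 -> S f2 -> lipnorm (f1 \- f2) = 2 -> diam S = 2.
Proof.
move=> SB S1 S2 E.
have ub : forall r, [set r | exists f g, S f /\ S g /\ r = lipnorm (f \- g)] r -> r <= 2.
  move=> r [a [b [Sa [Sb ->]]]].
  have /BLipP [_ Ha] := SB _ Sa; have /BLipP [_ Hb] := SB _ Sb.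
  apply: lip_le; first lra.
  move=> x y /=.
  have -> : a x - b x - (a y - b y) = (a x - a y) - (b x - b y) by ring.
  apply: le_trans (ler_normB _ _) _.
  have := Ha x y; have := Hb x y; lra.
rewrite /diam; apply/le_anti/andP; split.
  by apply: ge_sup; [exists 2, f1, f2 | exact: ub].
apply: ub_le_sup; first by exists 2.
by exists f1, f2; split => //; split.
Qed.

Theorem LD2P_holds (R : realType) (base : Pt) : LD2P R base.
Proof.
move=> phi Hphi Hn alpha a0.
pose b := alpha / 8.
have b0 : 0 < b by rewrite /b divr_gt0.
have [f [Bf Hf]] := exists_near Hphi Hn b0.
have [N [N0 HN]] := big_nat_inv b0.
have [z [Bz Hz]] := round Hphi Hn N0 Bf.

have zlip : forall p q, `|z p - z q| <= (cd p q)%:Z.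
  move=> p q; move/BLipP: Bz => [_ H]; have := H p q.
  by rewrite -intrB -intr_norm dist_cd -[(cd p q)%:R]/(((cd p q)%:Z)%:~R : R) ler_int.
have [i Hi] := niceZ_exists zlip.
have [u1 [v1 [u2 [v2 [V1 V2 Sep]]]]] := configs (niceZR R Hi).
have b8 : 0 < b / 8 by apply: divr_gt0.
have [M [M0 HM]] := big_nat_inv b8.
have [j [H1 H2 P1 P2]] := split_step Hphi Hn M0 Bz V1 V2.
have B1 := modf_BLip Bz V1 H1 H2.
have B2 := modf_BLip Bz V2 H1 H2.
have HM' : 8 / M%:R < b.
  have : 8 * M%:R^-1 < 8 * (b / 8) by rewrite ltr_pM2l.
  rewrite -[8 / M%:R]/(8 * M%:R^-1); lra.
apply: (@diam_le2 R base _ (modf (fun p => (z p)%:~R : R) i j u1 v1) (modf (fun p => (z p)%:~R : R) i j u2 v2)).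
- by move=> h [].
- by split => //; have Eb : b = alpha / 8 by []; lra.
- by split => //; have Eb : b = alpha / 8 by []; lra.
case: Sep => [S|[S|S]].
- apply: (@diam_pair R base _ _ (PU i j) (PX i)) => //.
  by rewrite dist_UX /modf /= !eqxx /= subrr subr0 mulr1.
- apply: (@diam_pair R base _ _ (PV i j) (PY i)) => //.
  by rewrite dist_VY /modf /= !eqxx /= subrr subr0 mulr1.
- apply: (@diam_pair R base _ _ (PU i j) (PV i j)) => //.
  rewrite dist_UV /modf /= !eqxx /= mulr1.
  by rewrite -S; congr (`|_|); ring.
Qed.

Ltac unabs := repeat match goal with
  | H : is_true (`|_| <= _) |- _ => rewrite ler_norml in H; case/andP: H => ? ?
  | H : is_true (`|_| < _) |- _ => rewrite ltr_norml in H; case/andP: H => ? ?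
  end.

Lemma ord3_cases (i : 'I_3) : i = o0 \/ i = o1 \/ i = o2.
Proof.
case: i => [[|[|[|k]]] Hi]; [left|right;left|right;right|by []];
  by apply: val_inj.
Qed.

Lemma succ3_o0 : succ3 o0 = o1. Proof. by apply: val_inj. Qed.
Lemma succ3_o1 : succ3 o1 = o2. Proof. by apply: val_inj. Qed.
Lemma succ3_o2 : succ3 o2 = o0. Proof. by apply: val_inj. Qed.

Definition pinned (p : Pt) := match p with PX _ | PY _ => true | _ => false end.

Lemma pair_cases p q : p <> q ->
  pinned p \/ pinned q \/ adj p q = false \/
  (exists i j, (p = PU i j /\ q = PV i j) \/ (p = PV i j /\ q = PU i j)).
Proof.
move=> Hpq; case Ha: (adj p q); last by right; right; left.
move: Ha; rewrite /adj => /orP[] /edge_spec.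
- case=> [[i [-> ->]]|[[i [j [-> ->]]]|[[i [j [-> ->]]]|[i [j [-> ->]]]]]]; auto.
  by right; right; right; exists i, j; left.
- case=> [[i [-> ->]]|[[i [j [-> ->]]]|[[i [j [-> ->]]]|[i [j [-> ->]]]]]]; auto.
  by right; right; right; exists i, j; right.
Qed.

Section Neg.
Variable R : realType.
Variable base : Pt.

Definition fx (i : 'I_3) : R := match val i with 0 => 0 | 1 => 7/4 | _ => 3/2 end.
Definition fy (i : 'I_3) : R := match val i with 0 => 2 | 1 => 1/2 | _ => 1/4 end.

Definition Fv (p : Pt) : R := match p with
  | PX i => fx i | PY i => fy i | PU i _ => (fx i + fy i) / 2 | PV i _ => (fx i + fy i) / 2 end.

Definition F0 (p : Pt) : R := Fv p - Fv base.

Lemma fxy_range i : 0 <= fx i <= 2 /\ 0 <= fy i <= 2.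
Proof.
by case: (ord3_cases i) => [->|[->|->]]; rewrite /fx /fy /=; split; apply/andP; split; lra.
Qed.

Lemma Fv_range p : 0 <= Fv p <= 2.
Proof.
case: p => [i|i|i j|i j] /=; have [/andP[? ?] /andP[? ?]] := fxy_range i;
  apply/andP; split; lra.
Qed.

Lemma Fv_lip p q : `|Fv p - Fv q| <= dist p q.
Proof.
case: (pt_eqbP p q) => [->|Hpq]; first by rewrite subrr normr0 dist_ge0.
rewrite dist_neq //; case Ha: (adj p q); last first.
  have := Fv_range p; have := Fv_range q => /andP[? ?] /andP[? ?].
  rewrite ler_norml; apply/andP; split; lra.
have edge1 a b : edge a b -> `|Fv a - Fv b| <= 1.
  case/edge_spec=> [[i [-> ->]]|[[i [j [-> ->]]]|[[i [j [-> ->]]]|[i [j [-> ->]]]]]] /=.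
  - case: (ord3_cases i) => [->|[->|->]];
      rewrite ?succ3_o0 ?succ3_o1 ?succ3_o2 /fx /fy /= ler_norml; apply/andP; split; lra.
  - have [/andP[? ?] /andP[? ?]] := fxy_range i.
    rewrite ler_norml; apply/andP; split; lra.
  - by rewrite subrr normr0.
  - have [/andP[? ?] /andP[? ?]] := fxy_range i.
    rewrite ler_norml; apply/andP; split; lra.
move: Ha; rewrite /adj => /orP[/edge1 //|/edge1]; by rewrite distrC.
Qed.

Lemma F0_BLip : BLip base F0.
Proof.
apply/BLipP; split; first by rewrite /F0 subrr.
move=> x y; rewrite /F0.
have -> : Fv x - Fv base - (Fv y - Fv base) = Fv x - Fv y by ring.
exact: Fv_lip.
Qed.

Definition pin (k : nat) : Pt := match k with
  | 0 => PX o0 | 1 => PY o0 | 2 => PX o1 | 3 => PY o1 | 4 => PX o2 | _ => PY o2 end%N.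

Definition eps : R := 1 / 100.

Definition U : set (Pt -> R) :=
  [set g | BLip base g /\ forall k, (k < 6)%N -> `|g (pin k) - F0 (pin k)| < eps].

Lemma U_pinned g w : U g -> pinned w -> `|g w - F0 w| < eps.
Proof.
move=> [_ H]; case: w => // i _; case: (ord3_cases i) => [->|[->|->]].
- exact: (H 0%N).
- exact: (H 2%N).
- exact: (H 4%N).
- exact: (H 1%N).
- exact: (H 3%N).
- exact: (H 5%N).
Qed.

End Neg.

Section Neg2.
Variable R : realType.
Variable base : Pt.

Lemma U_lip2 (g : Pt -> R) x y : U base g -> `|g x - g y| <= 2.
Proof.
move=> [/BLipP [_ H] _]; apply: le_trans (H x y) _; exact: dist_le2.
Qed.

Lemma U_lip (g : Pt -> R) x y : U base g -> `|g x - g y| <= dist x y.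
Proof. by move=> [/BLipP [_ H] _]. Qed.

Lemma path_bounds (g h : Pt -> R) i j : U base g -> U base h ->
  [/\ `|(g (PU i j) - h (PU i j))| <= 3/2 + 2 * eps R,
      `|(g (PV i j) - h (PV i j))| <= 3/2 + 2 * eps R &
      `|(g (PU i j) - h (PU i j)) - (g (PV i j) - h (PV i j))| <= 7/4 + 2 * eps R].
Proof.
move=> Ug Uh.
have g1 := U_lip (PU i j) (PX i) Ug; rewrite dist_UX in g1.
have g2 := U_lip2 (PU i j) (PX o0) Ug.
have g3 := U_lip2 (PU i j) (PY o0) Ug.
have g4 := U_lip (PV i j) (PY i) Ug; rewrite dist_VY in g4.
have g5 := U_lip2 (PV i j) (PX o0) Ug.
have g6 := U_lip2 (PV i j) (PY o0) Ug.
have g7 := U_lip (PU i j) (PV i j) Ug; rewrite dist_UV in g7.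
have h1 := U_lip (PU i j) (PX i) Uh; rewrite dist_UX in h1.
have h2 := U_lip2 (PU i j) (PX o0) Uh.
have h3 := U_lip2 (PU i j) (PY o0) Uh.
have h4 := U_lip (PV i j) (PY i) Uh; rewrite dist_VY in h4.
have h5 := U_lip2 (PV i j) (PX o0) Uh.
have h6 := U_lip2 (PV i j) (PY o0) Uh.
have h7 := U_lip (PU i j) (PV i j) Uh; rewrite dist_UV in h7.
have c1 := U_pinned (w:=PX o0) Ug isT.
have c2 := U_pinned (w:=PY o0) Ug isT.
have c3 := U_pinned (w:=PX i) Ug isT.
have c4 := U_pinned (w:=PY i) Ug isT.
have d1 := U_pinned (w:=PX o0) Uh isT.
have d2 := U_pinned (w:=PY o0) Uh isT.
have d3 := U_pinned (w:=PX i) Uh isT.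
have d4 := U_pinned (w:=PY i) Uh isT.
move: c1 c2 c3 c4 d1 d2 d3 d4.
rewrite /F0 /eps; move: (Fv R base) => Fb.
case: (ord3_cases i) => [E|[E|E]]; subst i; rewrite /Fv /fx /fy /= => c1 c2 c3 c4 d1 d2 d3 d4;
  unabs; split; rewrite ler_norml; apply/andP; split; lra.
Qed.

End Neg2.

Section Neg3.
Variable R : realType.
Variable base : Pt.

Lemma D_pinned (g h : Pt -> R) w : U base g -> U base h -> pinned w ->
  `|g w - h w| <= 2 * eps R.
Proof.
move=> Ug Uh Pw; have := U_pinned Ug Pw; have := U_pinned Uh Pw.
move=> a b; unabs; rewrite ler_norml; apply/andP; split; lra.
Qed.

Lemma D_all (g h : Pt -> R) p : U base g -> U base h ->
  `|g p - h p| <= 3/2 + 2 * eps R.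
Proof.
move=> Ug Uh; have e0 : 0 < eps R by rewrite /eps; lra.
case: p => [i|i|i j|i j].
- by apply: le_trans (D_pinned (w:=PX i) Ug Uh isT) _; lra.
- by apply: le_trans (D_pinned (w:=PY i) Ug Uh isT) _; lra.
- by case: (path_bounds i j Ug Uh).
- by case: (path_bounds i j Ug Uh).
Qed.

Lemma U_lipdiff (g h : Pt -> R) : U base g -> U base h ->
  forall p q, `|(g p - h p) - (g q - h q)| <= 9/5 * dist p q.
Proof.
move=> Ug Uh p q.
have e0 : eps R = 1/100 by [].
case: (pt_eqbP p q) => [->|Hpq]; first by rewrite subrr normr0 dist_self mulr0.
have d1 := @dist_ge1 R _ _ Hpq.
have Dp := D_all p Ug Uh; have Dq := D_all q Ug Uh.
case: (pair_cases Hpq) => [Pp|[Pq|[Ha|[i [j [[-> ->]|[-> ->]]]]]]].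
- have := D_pinned Ug Uh Pp => Hp.
  apply: le_trans (ler_normB _ _) _; lra.
- have := D_pinned Ug Uh Pq => Hq.
  apply: le_trans (ler_normB _ _) _; lra.
- rewrite dist_neq // Ha.
  apply: le_trans (ler_normB _ _) _; lra.
- rewrite dist_UV; case: (path_bounds i j Ug Uh) => _ _ H; lra.
- rewrite dist_sym dist_UV distrC; case: (path_bounds i j Ug Uh) => _ _ H; lra.
Qed.

Lemma U_ne : U base (F0 R base).
Proof.
split; first exact: F0_BLip.
by move=> k _; rewrite subrr normr0 /eps; lra.
Qed.

Lemma U_diam : diam (@U R base) <> 2.
Proof.
move=> E.
have : diam (@U R base) <= 9/5.
  apply: ge_sup; first by exists (lipnorm (F0 R base \- F0 R base)), (F0 R base), (F0 R base);
    split; [exact: U_ne | split; [exact: U_ne|]].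
  move=> r [f [g [Uf [Ug ->]]]].
  apply: lip_le; first lra.
  by move=> x y /=; apply: U_lipdiff.
rewrite E; lra.
Qed.

Lemma eval_inFree w : inFree base (fun f : Pt -> R => f w).
Proof.
split.
  split; first by [].
  exists 2 => f Hf; have Lf := lipnorm_ge0 Hf.
  have := isLip0_ub Hf w base; case: Hf => -> _; rewrite subr0 => H.
  apply: le_trans H _; rewrite mulrC; apply: ler_wpM2r; last exact: dist_le2.
  exact: Lf.
move=> e e0; exists [:: (1, w)].
apply: le_lt_trans e0; apply: ge_sup.
  by exists `|(fun f : Pt -> R => f w) (fun _ => 0) - \sum_(p <- [:: (1, w)]) p.1 * (fun _ => 0 : R) p.2|%R,
    (fun _ => 0); split => //; exact: BLip_zero.
by move=> r [f [_ ->]]; rewrite big_seq1 /= mul1r subrr normr0.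
Qed.

Definition minpos (n : nat) (a : nat -> R) : (forall k, (k < n)%N -> 0 < a k) ->
  exists e, 0 < e /\ forall k, (k < n)%N -> e <= a k.
Proof.
elim: n => [|n IH] H; first by exists 1; split => //; lra.
have [e [e0 He]] := IH (fun k Hk => H k (ltnW Hk)).
exists (Num.min e (a n)); split.
  by rewrite lt_min e0 H.
move=> k; rewrite ltnS leq_eqVlt => /orP[/eqP->|Hk].
  by rewrite ge_min lexx orbT.
by rewrite ge_min He.
Qed.

Lemma U_open : relOpen base (@inFree R base) (@U R base).
Proof.
split; first by move=> f [].
move=> f [Bf Hf].
have [e [e0 He]] := @minpos 6 (fun k => eps R - `|f (pin k) - F0 R base (pin k)|)
  (fun k Hk => ltac:(have := Hf k Hk; lra)).
exists 6%N, (fun k g => g (pin k)), e; split => //; split.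
  by move=> k _; apply: eval_inFree.
move=> g Bg Hg; split => // k Hk.
have := Hg k Hk; have := He k Hk => /= h1 h2.
have h3 := ler_distD (f (pin k)) (g (pin k)) (F0 R base (pin k)).
lra.
Qed.

End Neg3.

Theorem mainTheorem17 (R : realType) (base : Pt) :
  LD2P R base /\ ~ wstarD2P R base /\ ~ D2P R base.
Proof.
split; first exact: LD2P_holds.
have Uo := @U_open R base.
have Une : (@U R base) !=set0 by exists (F0 R base); exact: U_ne.
split.
  by move=> H; apply: (@U_diam R base); apply: H.
move=> H; apply: (@U_diam R base); apply: H => //.
case: Uo => H1 H2; split => // f Uf.
have [n [mus [e [e0 [Hm Hg]]]]] := H2 f Uf.
exists n, mus, e; split => //; split => // k Hk.
by case: (Hm k Hk).
Qed.
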